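(* Let $L_1$ be a finite-dimensional non-nilpotent Lie algebra over a field $F$. For every finite-dimensional nilpotent Lie algebra $L$ over $F$, the number of connected components of $\Gamma_{\mathfrak{N}}(L_1\oplus L)$ equals the number of connected components of $\Gamma_{\mathfrak{N}}(L_1)$. In particular, $\Gamma_{\mathfrak{N}}(L_1)$ is connected if and only if $\Gamma_{\mathfrak{N}}(L_1\oplus L)$ is connected for every finite-dimensional nilpotent Lie algebra $L$.
   Context: $\langle a,b\rangle$ denotes the Lie subalgebra generated by $a,b$, and $\mathrm{nil}(L)=\{x\in L\mid \langle h,x\rangle \text{ is nilpotent for all } h\in L\}$. For a finite-dimensional non-nilpotent Lie algebra $L$, the nilpotent graph $\Gamma_{\mathfrak{N}}(L)$ is the simple undirected graph with vertex set $L\setminus\mathrm{nil}(L)$ in which distinct vertices $x,y$ are adjacent iff $\langle x,y\rangle$ is nilpotent. $L_1\oplus L$ is the direct sum of Lie algebras with componentwise bracket. *)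

(* Defs.v *)
From HB Require Import structures.
From mathcomp Require Import all_boot all_algebra.
From mathcomp Require Import boolp classical_sets cardinality.
Set Implicit Arguments.
Unset Strict Implicit.
Unset Printing Implicit Defensive.
Import GRing.Theory.
Local Open Scope ring_scope.
Local Open Scope classical_set_scope.

(* Lie algebras over a field F, carried by an F-module V with a bracket b.
   Finite-dimensionality is imposed in the theorem by taking V : vectType F. *)
Section Lie.
Variables (F : fieldType) (V : lmodType F).
Implicit Types (b : V -> V -> V) (S U A : set V).

Definition lie_bracket b : Prop :=
  [/\ forall a x y z, b (a *: x + y) z = a *: b x z + b y z,
      forall a x y z, b x (a *: y + z) = a *: b x y + b x z,
      forall x, b x x = 0 &
      forall x y z, b x (b y z) + b y (b z x) + b z (b x y) = 0].

Definition is_subspace U : Prop :=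
  U 0 /\ forall a x y, U x -> U y -> U (a *: x + y).
Definition is_subalgebra b U : Prop :=
  is_subspace U /\ forall x y, U x -> U y -> U (b x y).

Definition lspan A : set V :=
  [set x | forall U, is_subspace U -> A `<=` U -> U x].

Definition gen_sub b (a c : V) : set V :=
  [set x | forall U, is_subalgebra b U -> U a -> U c -> U x].

(* lower central series of a subalgebra S: S^1 = S, S^(k+1) = [S, S^k] *)
Fixpoint lcs b S (n : nat) : set V :=
  if n is k.+1 then lspan [set z | exists x y, [/\ S x, lcs b S k y & z = b x y]]
  else S.

Definition nilpotent_sub b S : Prop := exists n, lcs b S n `<=` [set 0].
Definition nilpotent_lie b : Prop := nilpotent_sub b setT.

Definition nil_set b : set V :=
  [set x | forall h, nilpotent_sub b (gen_sub b h x)].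

Definition ng_vertex b : set V := ~` nil_set b.
Definition ng_adj b (x y : V) : Prop :=
  [/\ ng_vertex b x, ng_vertex b y, x <> y & nilpotent_sub b (gen_sub b x y)].

Inductive ng_conn b (x : V) : V -> Prop :=
  | ng_conn_refl : ng_vertex b x -> ng_conn b x x
  | ng_conn_step y z : ng_conn b x y -> ng_adj b y z -> ng_conn b x z.

Definition ng_components b : set (set V) :=
  [set C | exists x, ng_vertex b x /\ C = [set y | ng_conn b x y]].

Definition ng_connected b : Prop :=
  (exists x, ng_vertex b x) /\
  forall x y, ng_vertex b x -> ng_vertex b y -> ng_conn b x y.

End Lie.

Definition lie_dsum (F : fieldType) (V1 V2 : lmodType F)
  (b1 : V1 -> V1 -> V1) (b2 : V2 -> V2 -> V2) : (V1 * V2)%type -> (V1 * V2)%type -> (V1 * V2)%type :=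
  fun p q => (b1 p.1 q.1, b2 p.2 q.2).

(* Main.v *)
Require Import Defs.
From HB Require Import structures.
From mathcomp Require Import all_boot all_algebra.
From mathcomp Require Import boolp classical_sets cardinality.
Local Open Scope classical_set_scope.
Local Open Scope card_scope.

Set Implicit Arguments.
Unset Strict Implicit.
Import GRing.Theory.
Local Open Scope ring_scope.

Lemma lspan_sub (F : fieldType) (V : lmodType F) (A U : set V) :
  is_subspace U -> A `<=` U -> lspan A `<=` U.
Proof. by move=> hU hA x hx; apply: hx. Qed.

Lemma lspan_subspace (F : fieldType) (V : lmodType F) (A : set V) :
  is_subspace (lspan A).
Proof.
split; first by move=> U [hU _] _.
by move=> a x y hx hy U hU hA; apply: hU.2; [apply: hx|apply: hy].
Qed.

Lemma sub_lspan (F : fieldType) (V : lmodType F) (A : set V) : A `<=` lspan A.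
Proof. by move=> x hx U _ hA; apply: hA. Qed.

Lemma gen_sub_subalg (F : fieldType) (V : lmodType F) (b : V -> V -> V) a c :
  is_subalgebra b (gen_sub b a c).
Proof.
split; first split.
- by move=> U [[hU _] _].
- by move=> t x y hx hy U hU ha hc; apply: hU.1.2; [apply: hx|apply: hy].
- by move=> x y hx hy U hU ha hc; apply: hU.2; [apply: hx|apply: hy].
Qed.

Lemma gen_sub_min (F : fieldType) (V : lmodType F) (b : V -> V -> V) a c U :
  is_subalgebra b U -> U a -> U c -> gen_sub b a c `<=` U.
Proof. by move=> hU ha hc x hx; apply: hx. Qed.

Lemma gen_sub_l (F : fieldType) (V : lmodType F) (b : V -> V -> V) a c :
  gen_sub b a c a.
Proof. by move=> U. Qed.

Lemma gen_sub_r (F : fieldType) (V : lmodType F) (b : V -> V -> V) a c :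
  gen_sub b a c c.
Proof. by move=> U. Qed.

Lemma subspace0 (F : fieldType) (V : lmodType F) : is_subspace [set (0 : V)].
Proof. by split => // a x y -> ->; rewrite scaler0 addr0. Qed.

Lemma br0r (F : fieldType) (V : lmodType F) (b : V -> V -> V) x :
  lie_bracket b -> b x 0 = 0.
Proof.
move=> [_ h2 _ _]; have := h2 1 x 0 0; rewrite scaler0 addr0 scale1r => e.
by have := congr1 (fun t => t - b x 0) e; rewrite subrr addrK.
Qed.

Lemma br0l (F : fieldType) (V : lmodType F) (b : V -> V -> V) x :
  lie_bracket b -> b 0 x = 0.
Proof.
move=> [h1 _ _ _]; have := h1 1 0 0 x; rewrite scaler0 addr0 scale1r => e.
by have := congr1 (fun t => t - b 0 x) e; rewrite subrr addrK.
Qed.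

Lemma brZl (F : fieldType) (V : lmodType F) (b : V -> V -> V) a x y :
  lie_bracket b -> b (a *: x) y = a *: b x y.
Proof.
move=> hb; have [h1 _ _ _] := hb; have := h1 a x 0 y; rewrite !addr0 => ->.
by rewrite br0l // addr0.
Qed.

Lemma brZr (F : fieldType) (V : lmodType F) (b : V -> V -> V) a x y :
  lie_bracket b -> b x (a *: y) = a *: b x y.
Proof.
move=> hb; have [_ h2 _ _] := hb; have := h2 a x y 0; rewrite !addr0 => ->.
by rewrite br0r // addr0.
Qed.

Lemma lcs_zero_add (F : fieldType) (V : lmodType F) (b : V -> V -> V) S n k :
  lie_bracket b -> lcs b S n `<=` [set 0] -> lcs b S (n + k) `<=` [set 0].
Proof.
move=> hb h; elim: k => [|k IH]; first by rewrite addn0.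
rewrite addnS /=; apply: lspan_sub; first exact: subspace0.
by move=> z [x [y [_ /IH -> ->]]]; rewrite br0r.
Qed.

Lemma gen_self (F : fieldType) (V : lmodType F) (b : V -> V -> V) x :
  lie_bracket b -> nilpotent_sub b (gen_sub b x x).
Proof.
move=> hb; exists 1%N => /=; apply: lspan_sub; first exact: subspace0.
have sub : gen_sub b x x `<=` [set y | exists t : F, y = t *: x].
  apply: gen_sub_min; last by exists 1; rewrite scale1r.
  split; first split.
  - by exists 0; rewrite scale0r.
  - by move=> a u v [t ->] [s ->]; exists (a * t + s); rewrite scalerDl scalerA.
  - move=> u v [t ->] [s ->]; exists 0.
    by rewrite brZl // brZr // (let: And4 _ _ h _ := hb in h x) !scaler0 scale0r.
  by exists 1; rewrite scale1r.
move=> z [u [v [/sub [t ->] /sub [s ->] ->]]].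
by rewrite brZl // brZr // (let: And4 _ _ h _ := hb in h x) !scaler0.
Qed.

Lemma lcs_prod (F : fieldType) (V1 V2 : lmodType F) (b1 : V1 -> V1 -> V1)
  (b2 : V2 -> V2 -> V2) (S : set (V1 * V2)) (A : set V1) (B : set V2) n :
  (forall p, S p -> A p.1 /\ B p.2) ->
  forall p, lcs (lie_dsum b1 b2) S n p -> lcs b1 A n p.1 /\ lcs b2 B n p.2.
Proof.
move=> hS; elim: n => [|n IH] // p hp.
apply: (@lspan_sub _ _ _ [set r | lcs b1 A n.+1 r.1 /\ lcs b2 B n.+1 r.2] _ _ _ hp).
  split.
  - by split; exact: (proj1 (lspan_subspace _)).
  - move=> a x y [hx1 hx2] [hy1 hy2]; split.
    + exact: (proj2 (lspan_subspace _)).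
    + exact: (proj2 (lspan_subspace _)).
move=> z [x [y [hx /IH [hy1 hy2] ->]]]; have [hx1 hx2] := hS _ hx.
by split; apply: sub_lspan; exists x.1, y.1 || exists x.2, y.2.
Qed.

Lemma lcs_proj1 (F : fieldType) (V1 V2 : lmodType F) (b1 : V1 -> V1 -> V1)
  (b2 : V2 -> V2 -> V2) (S : set (V1 * V2)) (A : set V1) n :
  (forall x, A x -> exists y, S (x, y)) ->
  forall x, lcs b1 A n x -> exists y, lcs (lie_dsum b1 b2) S n (x, y).
Proof.
move=> hS; elim: n => [|n IH] // x0 hx0.
apply: (@lspan_sub _ _ _ [set x | exists y, lcs (lie_dsum b1 b2) S n.+1 (x, y)] _ _ _ hx0).
  split.
  - by exists 0; apply: (proj1 (lspan_subspace _)).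
  - move=> a x y [y1 h1] [y2 h2]; exists (a *: y1 + y2).
    exact: (proj2 (lspan_subspace _)) a (x, y1) (y, y2) h1 h2.
move=> z [x [y [/hS [yx hx] /IH [yy hy] ->]]].
exists (b2 yx yy); apply: sub_lspan; by exists (x, yx), (y, yy).
Qed.

Lemma dsum_nilA (F : fieldType) (V1 V2 : lmodType F) (b1 : V1 -> V1 -> V1)
  (b2 : V2 -> V2 -> V2) (p q : V1 * V2) :
  lie_bracket b1 -> lie_bracket b2 -> nilpotent_lie b2 ->
  nilpotent_sub b1 (gen_sub b1 p.1 q.1) ->
  nilpotent_sub (lie_dsum b1 b2) (gen_sub (lie_dsum b1 b2) p q).
Proof.
move=> hb1 hb2 [n2 h2] [n1 h1].
set A := gen_sub b1 p.1 q.1.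
have hA := gen_sub_subalg b1 p.1 q.1.
have sub : gen_sub (lie_dsum b1 b2) p q `<=` [set r | A r.1].
  apply: gen_sub_min; [|exact: gen_sub_l|exact: gen_sub_r].
  split; first split.
  - exact: hA.1.1.
  - by move=> a x y hx hy; apply: hA.1.2.
  - by move=> x y hx hy; apply: hA.2.
exists (n1 + n2)%N => r /(lcs_prod (A := A) (B := setT)) [].
  by move=> s /sub hs.
move=> /(lcs_zero_add (k := n2) hb1 h1) e1.
rewrite addnC => /(lcs_zero_add (k := n1) hb2 h2) e2.
by case: r e1 e2 => /= u v -> ->.
Qed.

Lemma dsum_nilB (F : fieldType) (V1 V2 : lmodType F) (b1 : V1 -> V1 -> V1)
  (b2 : V2 -> V2 -> V2) (p q : V1 * V2) :
  nilpotent_sub (lie_dsum b1 b2) (gen_sub (lie_dsum b1 b2) p q) ->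
  nilpotent_sub b1 (gen_sub b1 p.1 q.1).
Proof.
move=> [n h]; exists n.
set G := gen_sub (lie_dsum b1 b2) p q.
have hG := gen_sub_subalg (lie_dsum b1 b2) p q.
have sub : gen_sub b1 p.1 q.1 `<=` [set x | exists y, G (x, y)].
  apply: gen_sub_min.
  - split; first split.
    + by exists 0; exact: hG.1.1.
    + move=> a x y [y1 h1] [y2 h2]; exists (a *: y1 + y2).
      exact: hG.1.2 a (x, y1) (y, y2) h1 h2.
    + move=> x y [y1 h1] [y2 h2]; exists (b2 y1 y2).
      exact: hG.2 (x, y1) (y, y2) h1 h2.
  - by exists p.2; rewrite -surjective_pairing; exact: gen_sub_l.
  - by exists q.2; rewrite -surjective_pairing; exact: gen_sub_r.
move=> x /(@lcs_proj1 _ _ _ b1 b2 _ _ n sub) [y /h e].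
exact: (congr1 fst e).
Qed.

Lemma dsum_nil_iff (F : fieldType) (V1 V2 : lmodType F) (b1 : V1 -> V1 -> V1)
  (b2 : V2 -> V2 -> V2) (p q : V1 * V2) :
  lie_bracket b1 -> lie_bracket b2 -> nilpotent_lie b2 ->
  nilpotent_sub (lie_dsum b1 b2) (gen_sub (lie_dsum b1 b2) p q) <->
  nilpotent_sub b1 (gen_sub b1 p.1 q.1).
Proof.
by move=> hb1 hb2 hn; split; [exact: dsum_nilB|exact: dsum_nilA].
Qed.

Lemma dsum_vertex (F : fieldType) (V1 V2 : lmodType F) (b1 : V1 -> V1 -> V1)
  (b2 : V2 -> V2 -> V2) (p : V1 * V2) :
  lie_bracket b1 -> lie_bracket b2 -> nilpotent_lie b2 ->
  ng_vertex (lie_dsum b1 b2) p <-> ng_vertex b1 p.1.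
Proof.
move=> hb1 hb2 hn.
suff : nil_set (lie_dsum b1 b2) p <-> nil_set b1 p.1.
  by move=> [h1 h2]; split => hv hc; apply: hv; [apply: h2|apply: h1].
split.
- by move=> h h1; have := h (h1, 0); move/dsum_nilB.
- by move=> h h'; apply: dsum_nilA => //; exact: h.
Qed.

Lemma dsum_conn (F : fieldType) (V1 V2 : lmodType F) (b1 : V1 -> V1 -> V1)
  (b2 : V2 -> V2 -> V2) (p q : V1 * V2) :
  lie_bracket b1 -> lie_bracket b2 -> nilpotent_lie b2 ->
  ng_conn (lie_dsum b1 b2) p q <-> ng_conn b1 p.1 q.1.
Proof.
move=> hb1 hb2 hn; split.
- elim => [hv|r s _ IH [hr hs hne hnil]].
    by apply: ng_conn_refl; apply/(dsum_vertex _ hb1 hb2 hn).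
  have [e|ne] := pselect (r.1 = s.1); first by rewrite -e.
  apply: ng_conn_step IH _; split => //.
  + exact/(dsum_vertex _ hb1 hb2 hn).
  + exact/(dsum_vertex _ hb1 hb2 hn).
  + exact: dsum_nilB hnil.
- move=> h.
  suff : forall x, ng_conn b1 p.1 x -> forall q, q.1 = x -> ng_conn (lie_dsum b1 b2) p q.
    by move=> /(_ _ h q); apply.
  move=> x; elim => [hv|y z _ IH [hy hz hne hnil]] q' hq.
  + have hvp : ng_vertex (lie_dsum b1 b2) p by apply/(dsum_vertex _ hb1 hb2 hn).
    have [e|ne] := pselect (p = q'); first by rewrite -e; apply: ng_conn_refl.
    apply: ng_conn_step (ng_conn_refl hvp) _; split => //.
    * by apply/(dsum_vertex _ hb1 hb2 hn); rewrite hq.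
    * by apply: dsum_nilA => //; rewrite hq; exact: gen_self.
  + apply: (@ng_conn_step _ _ _ _ (y, q'.2)); first exact: IH.
    split => //.
    * exact/(dsum_vertex _ hb1 hb2 hn).
    * by apply/(dsum_vertex _ hb1 hb2 hn); rewrite hq.
    * by move=> e; apply: hne; rewrite -hq -e.
    * by apply: dsum_nilA => //=; rewrite hq.
Qed.

Lemma dsum_comps (F : fieldType) (V1 V2 : lmodType F) (b1 : V1 -> V1 -> V1)
  (b2 : V2 -> V2 -> V2) :
  lie_bracket b1 -> lie_bracket b2 -> nilpotent_lie b2 ->
  ng_components (lie_dsum b1 b2) #= ng_components b1.
Proof.
move=> hb1 hb2 hn.
pose f := fun C : set (V1 * V2) => fst @` C.
have key : forall x, f [set y | ng_conn (lie_dsum b1 b2) x y] = [set y | ng_conn b1 x.1 y].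
  move=> x; apply/seteqP; split.
  - by move=> y [q /(dsum_conn _ _ hb1 hb2 hn) hq <-].
  - move=> y hy; exists (y, 0) => //.
    exact/(dsum_conn _ _ hb1 hb2 hn).
have inv : forall x, [set y | ng_conn (lie_dsum b1 b2) x y] =
    fst @^-1` (f [set y | ng_conn (lie_dsum b1 b2) x y]).
  move=> x; rewrite key; apply/seteqP; split => y /=.
  - by move/(dsum_conn _ _ hb1 hb2 hn).
  - by move=> h; apply/(dsum_conn _ _ hb1 hb2 hn).
have -> : ng_components b1 = f @` ng_components (lie_dsum b1 b2).
  apply/seteqP; split.
  - move=> C [x [hx ->]].
    have hv : ng_vertex (lie_dsum b1 b2) (x, 0) by apply/(dsum_vertex _ hb1 hb2 hn).
    by exists [set y | ng_conn (lie_dsum b1 b2) (x, 0) y]; [exists (x, 0)|rewrite key].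
  - move=> C [D [x [hx ->]] <-]; exists x.1; split; last by rewrite key.
    exact/(dsum_vertex _ hb1 hb2 hn).
apply/card_esym/inj_card_eq => C D.
rewrite !in_setE => -[x [_ ->]] [y [_ ->]] e.
by rewrite (inv x) (inv y) e.
Qed.

Unset Implicit Arguments.

Theorem theorem5p4 (F : fieldType) (V1 : vectType F) (b1 : V1 -> V1 -> V1)
  (hb1 : lie_bracket b1) (hnn : ~ nilpotent_lie b1) :
  (forall (V : vectType F) (b : V -> V -> V),
     lie_bracket b -> nilpotent_lie b ->
     ng_components (lie_dsum b1 b) #= ng_components b1) /\
  (ng_connected b1 <->
     forall (V : vectType F) (b : V -> V -> V),
       lie_bracket b -> nilpotent_lie b -> ng_connected (lie_dsum b1 b)).
Proof.
split; first by move=> V b hb hn; exact: dsum_comps.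
split.
- move=> [[x hx] hall] V b hb hn; split.
    by exists (x, 0); apply/(dsum_vertex _ hb1 hb hn).
  move=> p q hp hq; apply/(dsum_conn _ _ hb1 hb hn).
  by apply: hall; apply/(dsum_vertex _ hb1 hb hn).
- move=> h.
  pose b0 := fun _ _ : V1 => (0 : V1).
  have hb0 : lie_bracket b0.
    by split => *; rewrite /b0 ?scaler0 ?addr0.
  have hn0 : nilpotent_lie b0.
    exists 1%N => /=; apply: lspan_sub; first exact: subspace0.
    by move=> z [x [y [_ _ ->]]].
  have [[p hp] hall] := h V1 b0 hb0 hn0.
  split; first by exists p.1; apply/(dsum_vertex _ hb1 hb0 hn0).
  move=> x y hx hy.
  have := hall (x, 0) (y, 0).
  move=> /(_ _ _)/(dsum_conn _ _ hb1 hb0 hn0); apply.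
  + exact/(dsum_vertex _ hb1 hb0 hn0).
  + exact/(dsum_vertex _ hb1 hb0 hn0).
Qed.
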